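(* Let $(x_{ij})$ lie in the polytope of the second level Poisson Matching LP, and let $f:[0,1]^2\to\mathbb{R}$ be normalized and DR submodular. Fix $j_1\ne j_2\in J$, with $x_{j}=\sum_ix_{ij}$. Let $\lambda_1^*,\lambda_2^*\ge0$ be the unique solution of \[ x_{j_1}=1-P_0(\lambda_1^* ),\qquad x_{j_2}=\big(2-P_0(\lambda_2^* )-P_1(\lambda_2^* )\big)-\big(1-P_0(\min\{\lambda_1^*,\lambda_2^*\})\big). \] With $\rho_{ij}=x_{ij}/\lambda_i$, the following holds. If $\lambda_1^*\le\lambda_2^*$, then \[ \sum_{i\in I}\lambda_i f(\rho_{ij_1},\rho_{ij_1}+\rho_{ij_2})\ge\int_0^{\lambda_1^*}f(P_0(\lambda),P_1(\lambda))\,d\lambda+\int_{\lambda_1^*}^{\lambda_2^*}f(0,P_1(\lambda))\,d\lambda . \] If $\lambda_1^*>\lambda_2^*$, then \[ \sum_{i\in I}\lambda_i f(\rho_{ij_1},\rho_{ij_1}+\rho_{ij_2})\ge\int_0^{\lambda_2^*}f(P_0(\lambda),P_1(\lambda))\,d\lambda+\int_{\lambda_2^*}^{\lambda_1^*}f(P_0(\lambda),P_0(\lambda))\,d\lambda . \]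
   Context: $I$ is a finite set of online types with rates $\lambda_i>0$, $J$ a finite set of offline vertices, and $E\subseteq I\times J$ the edges, with $x_{ij}=0$ for non-edges. $\lambda_S=\sum_{i\in S}\lambda_i$ and $P_k(\lambda)=e^{-\lambda}\sum_{m=0}^k\lambda^m/m!$. The polytope of the second level Poisson Matching LP is the set of $x\ge0$ with: - $\sum_jx_{ij}\le\lambda_i$ for all $i$; - $\sum_{i\in S}x_{ij}\le1-P_0(\lambda_S)$ for all $S\subseteq I$ and $j\in J$; - $\sum_{i\in S}(x_{ij}+x_{ij'})\le(1-P_0(\lambda_S))+(1-P_1(\lambda_S))$ for all $S\subseteq I$ and distinct $j,j'\in J$. A smooth $f:[0,1]^2\to\mathbb{R}$ is DR submodular if all entries of its Hessian are $\le0$ everywhere. It is normalized if $f(0,0)=0$. *)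

(* Defs.v *)
From mathcomp Require Import ssreflect ssrbool ssrfun eqtype ssrnat seq choice fintype finset bigop.
From Stdlib Require Import Reals.
From Coquelicot Require Import Coquelicot.
Open Scope R_scope.

Definition rsum {T : finType} (A : pred T) (F : T -> R) : R :=
  \big[Rplus/0]_(i in A) F i.

Definition Pk (k : nat) (l : R) : R :=
  exp (- l) * sum_f_R0 (fun m => l ^ m / INR (Factorial.fact m)) k.

Definition lamS {I : finType} (lam : I -> R) (S : {set I}) : R :=
  rsum (mem S) lam.

Definition in_PM2 {I J : finType} (lam : I -> R) (E : I -> J -> bool)
    (x : I -> J -> R) : Prop :=
  (forall i j, 0 <= x i j) /\
  (forall i j, ~~ E i j -> x i j = 0) /\
  (forall i, rsum predT (fun j => x i j) <= lam i) /\
  (forall (S : {set I}) (j : J),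
      rsum (mem S) (fun i => x i j) <= 1 - Pk 0 (lamS lam S)) /\
  (forall (S : {set I}) (j j' : J), j <> j' ->
      rsum (mem S) (fun i => x i j + x i j')
        <= (1 - Pk 0 (lamS lam S)) + (1 - Pk 1 (lamS lam S))).

Definition d1 (f : R -> R -> R) (u v : R) : R := Derive (fun t => f t v) u.
Definition d2 (f : R -> R -> R) (u v : R) : R := Derive (fun t => f u t) v.

Definition jcont (g : R -> R -> R) (u v : R) : Prop :=
  continuous (fun p : R * R => g (fst p) (snd p)) (u, v).

(* f is (at least) C^2 on an open neighbourhood of [0,1]^2, so that its
   Hessian is defined everywhere on [0,1]^2 *)
Definition smooth_on_square (f : R -> R -> R) : Prop :=
  exists eps : R, 0 < eps /\
  forall u v, - eps < u < 1 + eps -> - eps < v < 1 + eps ->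
    ex_derive (fun t => f t v) u /\ ex_derive (fun t => f u t) v /\
    ex_derive (fun t => d1 f t v) u /\ ex_derive (fun t => d1 f u t) v /\
    ex_derive (fun t => d2 f t v) u /\ ex_derive (fun t => d2 f u t) v /\
    jcont f u v /\
    jcont (d1 f) u v /\ jcont (d2 f) u v /\
    jcont (fun a b => d1 (d1 f) a b) u v /\ jcont (fun a b => d2 (d1 f) a b) u v /\
    jcont (fun a b => d1 (d2 f) a b) u v /\ jcont (fun a b => d2 (d2 f) a b) u v.

Definition DR_submodular (f : R -> R -> R) : Prop :=
  smooth_on_square f /\
  forall u v, 0 <= u <= 1 -> 0 <= v <= 1 ->
    d1 (d1 f) u v <= 0 /\ d2 (d1 f) u v <= 0 /\
    d1 (d2 f) u v <= 0 /\ d2 (d2 f) u v <= 0.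

Definition normalized (f : R -> R -> R) : Prop := f 0 0 = 0.

(* Main.v *)
From Pilot Require Import Defs.
From HB Require Import structures.
From mathcomp Require Import ssreflect ssrbool ssrfun eqtype ssrnat seq choice fintype finset bigop.
From Stdlib Require Import Reals Lra Psatz.
From Coquelicot Require Import Coquelicot.
Import Pilot.Defs.
Open Scope R_scope.

Lemma mvt01 (g dg : R -> R) x y :
  (forall t, 0 <= t <= 1 -> is_derive g t (dg t)) -> 0 <= x -> x <= y -> y <= 1 ->
  exists c, x <= c <= y /\ g y - g x = dg c * (y - x).
Proof.
move=> Hd Hx Hxy Hy.
have H := MVT_gen g x y dg.
rewrite /Rmin /Rmax in H.
destruct (Rle_dec x y) as [_|n]; last lra.
apply: H.
- move=> t Ht; apply: Hd; lra.
- move=> t Ht. apply/continuity_pt_filterlim.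
  apply: (ex_derive_continuous g). exists (dg t). apply: Hd; lra.
Qed.

Lemma antitone01 (g dg : R -> R) x y :
  (forall t, 0 <= t <= 1 -> is_derive g t (dg t)) ->
  (forall t, 0 <= t <= 1 -> dg t <= 0) ->
  0 <= x -> x <= y -> y <= 1 -> g y <= g x.
Proof.
move=> Hd Hn Hx Hxy Hy.
have [c [Hc E]] := mvt01 g dg x y Hd Hx Hxy Hy.
have : dg c * (y - x) <= 0.
  have := Hn c ltac:(lra). nra.
lra.
Qed.

Lemma tangent01 (g dg : R -> R) x y :
  (forall t, 0 <= t <= 1 -> is_derive g t (dg t)) ->
  (forall s t, 0 <= s -> s <= t -> t <= 1 -> dg t <= dg s) ->
  0 <= x <= 1 -> 0 <= y <= 1 -> g y <= g x + dg x * (y - x).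
Proof.
move=> Hd Hm Hx Hy.
destruct (Rle_dec x y) as [Hxy|Hxy].
- have [c [Hc E]] := mvt01 g dg x y Hd ltac:(lra) Hxy ltac:(lra).
  have := Hm x c ltac:(lra) ltac:(lra) ltac:(lra). nra.
- have [c [Hc E]] := mvt01 g dg y x Hd ltac:(lra) ltac:(lra) ltac:(lra).
  have := Hm c x ltac:(lra) ltac:(lra) ltac:(lra). nra.
Qed.

Section DR.
Variable f : R -> R -> R.
Hypothesis Hf : DR_submodular f.

Lemma smooth01 u v : 0 <= u <= 1 -> 0 <= v <= 1 ->
    ex_derive (fun t => f t v) u /\ ex_derive (fun t => f u t) v /\
    ex_derive (fun t => d1 f t v) u /\ ex_derive (fun t => d1 f u t) v /\
    ex_derive (fun t => d2 f t v) u /\ ex_derive (fun t => d2 f u t) v /\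
    jcont f u v /\
    jcont (d1 f) u v /\ jcont (d2 f) u v /\
    jcont (fun a b => d1 (d1 f) a b) u v /\ jcont (fun a b => d2 (d1 f) a b) u v /\
    jcont (fun a b => d1 (d2 f) a b) u v /\ jcont (fun a b => d2 (d2 f) a b) u v.
Proof.
case: Hf => [[eps [He H]] _] Hu Hv. apply: H; lra.
Qed.

Lemma hess01 u v : 0 <= u <= 1 -> 0 <= v <= 1 ->
    d1 (d1 f) u v <= 0 /\ d2 (d1 f) u v <= 0 /\
    d1 (d2 f) u v <= 0 /\ d2 (d2 f) u v <= 0.
Proof. case: Hf => _ H; exact: H. Qed.

Lemma d1_anti_u u1 u2 v : 0 <= u1 -> u1 <= u2 -> u2 <= 1 -> 0 <= v <= 1 ->
  d1 f u2 v <= d1 f u1 v.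
Proof.
move=> h1 h2 h3 hv.
apply: (antitone01 (fun t => d1 f t v) (fun t => d1 (d1 f) t v)) => //.
- move=> t Ht. have := smooth01 t v Ht hv. intuition. by apply: Derive_correct.
- move=> t Ht. have := hess01 t v Ht hv. intuition.
Qed.

Lemma d1_anti_v u v1 v2 : 0 <= u <= 1 -> 0 <= v1 -> v1 <= v2 -> v2 <= 1 ->
  d1 f u v2 <= d1 f u v1.
Proof.
move=> hu h1 h2 h3.
apply: (antitone01 (fun t => d1 f u t) (fun t => d2 (d1 f) u t)) => //.
- move=> t Ht. have := smooth01 u t hu Ht. intuition. by apply: Derive_correct.
- move=> t Ht. have := hess01 u t hu Ht. intuition.
Qed.

Lemma d2_anti_u u1 u2 v : 0 <= u1 -> u1 <= u2 -> u2 <= 1 -> 0 <= v <= 1 ->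
  d2 f u2 v <= d2 f u1 v.
Proof.
move=> h1 h2 h3 hv.
apply: (antitone01 (fun t => d2 f t v) (fun t => d1 (d2 f) t v)) => //.
- move=> t Ht. have := smooth01 t v Ht hv. intuition. by apply: Derive_correct.
- move=> t Ht. have := hess01 t v Ht hv. intuition.
Qed.

Lemma d2_anti_v u v1 v2 : 0 <= u <= 1 -> 0 <= v1 -> v1 <= v2 -> v2 <= 1 ->
  d2 f u v2 <= d2 f u v1.
Proof.
move=> hu h1 h2 h3.
apply: (antitone01 (fun t => d2 f u t) (fun t => d2 (d2 f) u t)) => //.
- move=> t Ht. have := smooth01 u t hu Ht. intuition. by apply: Derive_correct.
- move=> t Ht. have := hess01 u t hu Ht. intuition.
Qed.

Lemma tan1 x y v : 0 <= x <= 1 -> 0 <= y <= 1 -> 0 <= v <= 1 ->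
  f y v <= f x v + d1 f x v * (y - x).
Proof.
move=> hx hy hv.
apply: (tangent01 (fun t => f t v) (fun t => d1 f t v)) => //.
- move=> t Ht. have := smooth01 t v Ht hv. intuition. by apply: Derive_correct.
- move=> s t h1 h2 h3. by apply: d1_anti_u.
Qed.

Lemma tan2 u x y : 0 <= u <= 1 -> 0 <= x <= 1 -> 0 <= y <= 1 ->
  f u y <= f u x + d2 f u x * (y - x).
Proof.
move=> hu hx hy.
apply: (tangent01 (fun t => f u t) (fun t => d2 f u t)) => //.
- move=> t Ht. have := smooth01 u t hu Ht. intuition. by apply: Derive_correct.
- move=> s t h1 h2 h3. by apply: d2_anti_v.
Qed.

Lemma diff_anti a1 a2 y1 y2 : 0 <= a1 -> a1 <= a2 -> a2 <= 1 ->
  0 <= y1 -> y1 <= y2 -> y2 <= 1 ->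
  f a2 y2 - f a1 y2 <= f a2 y1 - f a1 y1.
Proof.
move=> h1 h2 h3 h4 h5 h6.
apply: (antitone01 (fun t => f a2 t - f a1 t) (fun t => d2 f a2 t - d2 f a1 t)) => //.
- move=> t Ht. apply: (is_derive_minus (fun t => f a2 t) (fun t => f a1 t)).
  + have := smooth01 a2 t ltac:(lra) Ht. intuition. by apply: Derive_correct.
  + have := smooth01 a1 t ltac:(lra) Ht. intuition. by apply: Derive_correct.
- move=> t Ht. have := d2_anti_u a1 a2 t h1 h2 h3 Ht. lra.
Qed.

End DR.

Lemma Pk0E s : Pk 0 s = exp (- s).
Proof. rewrite /Pk /=. field. Qed.
Lemma Pk1E s : Pk 1 s = exp (- s) * (1 + s).
Proof. rewrite /Pk /=. field. Qed.

Lemma exp_mono x y : x <= y -> exp x <= exp y.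
Proof. case=> [h|->]; [left; exact: exp_increasing|lra]. Qed.

Lemma Pk0_01 s : 0 <= s -> 0 <= Pk 0 s <= 1.
Proof.
move=> hs; rewrite Pk0E; split; first by left; apply exp_pos.
rewrite -exp_0; apply exp_mono; lra.
Qed.

Lemma Pk0_le_Pk1 s : 0 <= s -> Pk 0 s <= Pk 1 s.
Proof. move=> hs; rewrite Pk0E Pk1E. have := exp_pos (-s). nra. Qed.

Lemma Pk1_01 s : 0 <= s -> 0 <= Pk 1 s <= 1.
Proof.
move=> hs; have := Pk0_01 s hs; have := Pk0_le_Pk1 s hs => h1 h2.
split; first lra.
rewrite Pk1E.
have h := exp_ineq1_le s.
have e : exp (-s) * exp s = 1 by rewrite -exp_plus; replace (-s+s) with 0 by ring; apply exp_0.
have := exp_pos (-s). nra.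
Qed.

Lemma Pk0_anti s t : s <= t -> Pk 0 t <= Pk 0 s.
Proof. move=> h; rewrite !Pk0E; apply exp_mono; lra. Qed.

Lemma Pk1_anti s t : 0 <= s -> s <= t -> Pk 1 t <= Pk 1 s.
Proof.
move=> hs h; rewrite !Pk1E.
have E : exp (-s) = exp (-t) * exp (t - s).
  by rewrite -exp_plus; f_equal; ring.
rewrite E.
have h1 := exp_ineq1_le (t - s).
have h2 := exp_pos (-t).
have : 1 + t <= exp (t - s) * (1 + s) by nra.
nra.
Qed.

Definition astar (l1 : R) (s : R) : R := if Rlt_dec s l1 then Pk 0 s else 0.
Definition bstar (l1 l2 : R) (s : R) : R :=
  if Rlt_dec s l2 then Pk 1 s else if Rlt_dec s l1 then Pk 0 s else 0.

Lemma astar_01 l1 s : 0 <= s -> 0 <= astar l1 s <= 1.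
Proof. move=> hs; rewrite /astar; case: Rlt_dec => ? /=; [exact: Pk0_01|lra]. Qed.

Lemma bstar_01 l1 l2 s : 0 <= s -> 0 <= bstar l1 l2 s <= 1.
Proof.
move=> hs; rewrite /bstar; case: Rlt_dec => ? /=; first exact: Pk1_01.
case: Rlt_dec => ? /=; [exact: Pk0_01|lra].
Qed.

Lemma astar_anti l1 s t : 0 <= s -> s <= t -> astar l1 t <= astar l1 s.
Proof.
move=> hs h; rewrite /astar.
case: (Rlt_dec t l1) => ht /=; case: (Rlt_dec s l1) => hs' /=; try lra.
- exact: Pk0_anti.
- have := Pk0_01 s hs; lra.
Qed.

Lemma bstar_anti l1 l2 s t : 0 <= s -> s <= t -> bstar l1 l2 t <= bstar l1 l2 s.
Proof.
move=> hs h; rewrite /bstar.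
have := Pk0_01 s hs; have := Pk0_01 t ltac:(lra); have := Pk1_01 t ltac:(lra).
have := Pk0_le_Pk1 s hs; have := Pk0_anti s t h; have := Pk1_anti s t hs h.
case: (Rlt_dec t l2) => ht2 /=; case: (Rlt_dec s l2) => hs2 /=; try lra;
case: (Rlt_dec t l1) => ht1 /=; case: (Rlt_dec s l1) => hs1 /=; lra.
Qed.

Lemma ex_RInt_3 (g g1 g2 g3 : R -> R) c1 c2 p q : p <= q -> c1 <= c2 ->
  (forall s, p < s < q -> s < c1 -> g s = g1 s) ->
  (forall s, p < s < q -> c1 < s < c2 -> g s = g2 s) ->
  (forall s, p < s < q -> c2 < s -> g s = g3 s) ->
  (forall s, p <= s <= q -> continuous g1 s /\ continuous g2 s /\ continuous g3 s) ->
  ex_RInt g p q.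
Proof.
move=> hpq hc E1 E2 E3 C.
pose m1 := Rmax p (Rmin q c1). pose m2 := Rmax p (Rmin q c2).
have F : p <= m1 /\ m1 <= m2 /\ m2 <= q /\ (forall s, p < s < m1 -> s < c1)
   /\ (forall s, m1 < s < m2 -> c1 < s < c2) /\ (forall s, m2 < s < q -> c2 < s).
  rewrite /m1 /m2 /Rmax /Rmin.
  destruct (Rle_dec q c1); destruct (Rle_dec q c2);
  repeat match goal with |- context [Rle_dec ?a ?b] => destruct (Rle_dec a b) end;
  repeat split; intros; lra.
case: F => [h1 [h2 [h3 [F1 [F2 F3]]]]].
have piece : forall (gk : R -> R) x y, p <= x -> x <= y -> y <= q ->
   (forall s, x <= s <= y -> continuous gk s) ->
   (forall s, x < s < y -> g s = gk s) -> ex_RInt g x y.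
  move=> gk x y hx hxy hy Cg Eg.
  apply: (ex_RInt_ext gk).
  - rewrite Rmin_left // Rmax_right // => s hs; by rewrite Eg.
  - apply: ex_RInt_continuous. rewrite Rmin_left // Rmax_right // => s hs; by apply Cg.
apply: (ex_RInt_Chasles _ p m1 q).
- apply: (piece g1 p m1); try lra.
  + move=> s hs; apply C; lra.
  + move=> s hs; apply E1; [lra|apply F1; lra].
apply: (ex_RInt_Chasles _ m1 m2 q).
- apply: (piece g2 m1 m2); try lra.
  + move=> s hs; apply C; lra.
  + move=> s hs; apply E2; [lra|apply F2; lra].
- apply: (piece g3 m2 q); try lra.
  + move=> s hs; apply C; lra.
  + move=> s hs; apply E3; [lra|apply F3; lra].
Qed.

Lemma cont_Pk0 s : continuous (fun t => Pk 0 t) s.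
Proof.
apply: (continuous_ext (fun t => exp (- t))); first by move=> t; rewrite Pk0E.
apply: ex_derive_continuous; auto_derive; done.
Qed.
Lemma cont_Pk1 s : continuous (fun t => Pk 1 t) s.
Proof.
apply: (continuous_ext (fun t => exp (- t) * (1 + t))); first by move=> t; rewrite Pk1E.
apply: ex_derive_continuous; auto_derive; done.
Qed.

Definition cont01 (Phi : R -> R -> R) :=
  forall u v, 0 <= u <= 1 -> 0 <= v <= 1 ->
    continuous (fun z : R * R => Phi (fst z) (snd z)) (u, v).

Lemma cont01_comp (Phi : R -> R -> R) (g h : R -> R) s :
  cont01 Phi -> continuous g s -> continuous h s ->
  0 <= g s <= 1 -> 0 <= h s <= 1 -> continuous (fun t => Phi (g t) (h t)) s.
Proof.
move=> CP Cg Ch hg hh. apply: continuous_comp_2 => //. exact: CP.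
Qed.

Lemma ex_RInt_prof (Phi : R -> R -> R) l1 l2 p q :
  0 <= l1 -> 0 <= l2 -> 0 <= p -> p <= q -> cont01 Phi ->
  ex_RInt (fun t => Phi (astar l1 t) (bstar l1 l2 t)) p q.
Proof.
move=> h1 h2 hp hpq CP.
have c0 := continuous_const (0:R).
have b00 : 0 <= (0:R) <= 1 by lra.
rewrite /astar /bstar.
case: (Rle_lt_dec l1 l2) => hl.
- apply: (ex_RInt_3 _ (fun t => Phi (Pk 0 t) (Pk 1 t)) (fun t => Phi 0 (Pk 1 t))
     (fun t => Phi 0 0) l1 l2) => //.
  + move=> s _ hs. do 2 (case: Rlt_dec => ? /=; try lra).
  + move=> s _ hs. do 3 (case: Rlt_dec => ? /=; try lra).
  + move=> s _ hs. do 3 (case: Rlt_dec => ? /=; try lra).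
  + move=> s hs; repeat split; apply: cont01_comp => //;
      try apply: cont_Pk0; try apply: cont_Pk1; try apply: continuous_const;
      try apply: Pk0_01; try apply: Pk1_01; lra.
- apply: (ex_RInt_3 _ (fun t => Phi (Pk 0 t) (Pk 1 t)) (fun t => Phi (Pk 0 t) (Pk 0 t))
     (fun t => Phi 0 0) l2 l1) => //; first lra.
  + move=> s _ hs. do 2 (case: Rlt_dec => ? /=; try lra).
  + move=> s _ hs. do 3 (case: Rlt_dec => ? /=; try lra).
  + move=> s _ hs. do 3 (case: Rlt_dec => ? /=; try lra).
  + move=> s hs; repeat split; apply: cont01_comp => //;
      try apply: cont_Pk0; try apply: cont_Pk1; try apply: continuous_const;
      try apply: Pk0_01; try apply: Pk1_01; lra.
Qed.

Lemma RInt_Pk0 a b : RInt (fun s => Pk 0 s) a b = Pk 0 a - Pk 0 b.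
Proof.
apply: is_RInt_unique.
apply: (is_RInt_ext (fun s => exp (- s))); first by move=> x _; rewrite Pk0E.
have H := is_RInt_derive (fun s => - exp (- s)) (fun s => exp (- s)) a b.
rewrite !Pk0E.
have -> : exp (- a) - exp (- b) = minus (- exp (- b)) (- exp (- a)).
  rewrite /minus /plus /opp /=; ring.
apply: H => x _.
- auto_derive => //; ring.
- apply: ex_derive_continuous; auto_derive; done.
Qed.

Lemma RInt_Pk1 a b : RInt (fun s => Pk 1 s) a b = (Pk 0 a + Pk 1 a) - (Pk 0 b + Pk 1 b).
Proof.
apply: is_RInt_unique.
apply: (is_RInt_ext (fun s => exp (- s) * (1 + s))); first by move=> x _; rewrite Pk1E.
have H := is_RInt_derive (fun s => - (exp (- s) * (2 + s))) (fun s => exp (- s) * (1 + s)) a b.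
rewrite !Pk0E !Pk1E.
have -> : exp (- a) + exp (- a) * (1 + a) - (exp (- b) + exp (- b) * (1 + b)) =
   minus (- (exp (- b) * (2 + b))) (- (exp (- a) * (2 + a))).
  rewrite /minus /plus /opp /=; ring.
apply: H => x _.
- auto_derive => //; ring.
- apply: ex_derive_continuous; auto_derive; done.
Qed.

Lemma cont01_fst : cont01 (fun u v => u).
Proof. move=> u v _ _. apply: continuous_fst. Qed.
Lemma cont01_snd : cont01 (fun u v => v).
Proof. move=> u v _ _. apply: continuous_snd. Qed.

Section Prof.
Variables l1 l2 : R.
Hypothesis h1 : 0 <= l1.
Hypothesis h2 : 0 <= l2.

Lemma ex_astar p q : 0 <= p -> p <= q -> ex_RInt (astar l1) p q.
Proof. move=> hp hq. exact: (ex_RInt_prof (fun u v => u) l1 l2 p q h1 h2 hp hq cont01_fst). Qed.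
Lemma ex_bstar p q : 0 <= p -> p <= q -> ex_RInt (bstar l1 l2) p q.
Proof. move=> hp hq. exact: (ex_RInt_prof (fun u v => v) l1 l2 p q h1 h2 hp hq cont01_snd). Qed.

Lemma RInt_zero a b : RInt (fun _ => 0) a b = 0.
Proof. rewrite RInt_const /scal /= /mult /=; ring. Qed.

Lemma Fa_le t : 0 <= t -> t <= l1 -> RInt (astar l1) 0 t = 1 - Pk 0 t.
Proof.
move=> ht htl.
rewrite (RInt_ext _ (fun s => Pk 0 s)); first by rewrite RInt_Pk0 Pk0E Ropp_0 exp_0.
rewrite Rmin_left // Rmax_right // => s hs.
rewrite /astar; case: Rlt_dec => ? /=; lra.
Qed.

Lemma Fa_ge t : l1 <= t -> RInt (astar l1) 0 t = 1 - Pk 0 l1.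
Proof.
move=> ht.
rewrite -(RInt_Chasles _ 0 l1 t); try apply: ex_astar; try lra.
rewrite Fa_le; try lra.
rewrite (RInt_ext _ (fun _ => 0)); first (rewrite RInt_zero /plus /=; ring).
rewrite Rmin_left // Rmax_right // => s hs.
rewrite /astar; case: Rlt_dec => ? /=; lra.
Qed.

Definition Gf (t : R) := 2 - Pk 0 t - Pk 1 t.

Lemma Gb_le2 t : 0 <= t -> t <= l2 -> RInt (bstar l1 l2) 0 t = Gf t.
Proof.
move=> ht htl.
rewrite (RInt_ext _ (fun s => Pk 1 s)); first (rewrite RInt_Pk1 /Gf !Pk0E !Pk1E Ropp_0 exp_0; rewrite -/(Rplus 1 1); simpl; lra).
rewrite Rmin_left // Rmax_right // => s hs.
rewrite /bstar; case: Rlt_dec => ? /=; lra.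
Qed.

Lemma Gb_case1 t : l1 <= l2 -> l2 <= t -> RInt (bstar l1 l2) 0 t = Gf l2.
Proof.
move=> hl ht.
rewrite -(RInt_Chasles _ 0 l2 t); try apply: ex_bstar; try lra.
rewrite Gb_le2; try lra.
rewrite (RInt_ext _ (fun _ => 0)); first (rewrite RInt_zero /plus /=; ring).
rewrite Rmin_left // Rmax_right // => s hs.
rewrite /bstar; do 2 (case: Rlt_dec => ? /=; try lra).
Qed.

Lemma Gb_case2a t : l2 < l1 -> l2 <= t -> t <= l1 ->
  RInt (bstar l1 l2) 0 t = Gf l2 + (Pk 0 l2 - Pk 0 t).
Proof.
move=> hl ht ht1.
rewrite -(RInt_Chasles _ 0 l2 t); try apply: ex_bstar; try lra.
rewrite Gb_le2; try lra.
rewrite (RInt_ext _ (fun s => Pk 0 s)); first by rewrite RInt_Pk0.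
rewrite Rmin_left // Rmax_right // => s hs.
rewrite /bstar; do 2 (case: Rlt_dec => ? /=; try lra).
Qed.

Lemma Gb_case2b t : l2 < l1 -> l1 <= t ->
  RInt (bstar l1 l2) 0 t = Gf l2 + (Pk 0 l2 - Pk 0 l1).
Proof.
move=> hl ht.
rewrite -(RInt_Chasles _ 0 l1 t); try apply: ex_bstar; try lra.
rewrite Gb_case2a; try lra.
rewrite (RInt_ext _ (fun _ => 0)); first (rewrite RInt_zero /plus /=; ring).
rewrite Rmin_left // Rmax_right // => s hs.
rewrite /bstar; do 2 (case: Rlt_dec => ? /=; try lra).
Qed.

End Prof.

Set Implicit Arguments. Unset Strict Implicit.

HB.instance Definition _ := Monoid.isComLaw.Build R 0 Rplus
  (fun a b c => esym (Rplus_assoc a b c)) Rplus_comm Rplus_0_l.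

Section Lists.
Variable I : finType.
Variable lam : I -> R.
Hypothesis lam_ge0 : forall i, 0 <= lam i.

Fixpoint psum (g : I -> R -> R) (p : R) (s : seq I) : R :=
  match s with
  | [::] => 0
  | i :: s' => g i p + psum g (p + lam i) s'
  end.

Definition lsum (F : I -> R) (s : seq I) : R := \big[Rplus/0]_(i <- s) F i.

Lemma lsum_nil F : lsum F [::] = 0.
Proof. by rewrite /lsum big_nil. Qed.
Lemma lsum_cons F i s : lsum F (i :: s) = F i + lsum F s.
Proof. by rewrite /lsum big_cons. Qed.

Lemma lsum_ge0 F s : (forall i, 0 <= F i) -> 0 <= lsum F s.
Proof.
move=> H; elim: s => [|i s IH]; rewrite ?lsum_nil ?lsum_cons; first lra.
have := H i; lra.
Qed.

Lemma psum_const (F : I -> R) p s : psum (fun i _ => F i) p s = lsum F s.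
Proof.
elim: s p => [|i s IH] p /=; first by rewrite !lsum_nil.
by rewrite IH !lsum_cons.
Qed.

Lemma psum_tele (C : R -> R) p s :
  psum (fun i p => C (p + lam i) - C p) p s = C (p + lsum lam s) - C p.
Proof.
elim: s p => [|i s IH] p /=; first by rewrite !lsum_nil Rplus_0_r; ring.
rewrite IH !lsum_cons Rplus_assoc; ring.
Qed.

Lemma psum_plus g h p s : psum (fun i p => g i p + h i p) p s = psum g p s + psum h p s.
Proof. elim: s p => [|i s IH] p /=; [ring| rewrite IH; ring]. Qed.

Lemma psum_opp g p s : psum (fun i p => - g i p) p s = - psum g p s.
Proof. elim: s p => [|i s IH] p /=; [ring| rewrite IH; ring]. Qed.

Lemma psum_le g h p s : (forall i p, g i p <= h i p) -> psum g p s <= psum h p s.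
Proof. move=> H; elim: s p => [|i s IH] p /=; first lra. have := H i p; have := IH (p + lam i); lra. Qed.

Lemma psum_ext g h p s : (forall i q, p <= q -> g i q = h i q) -> psum g p s = psum h p s.
Proof.
elim: s p => [|i s IH] p H /=; first done.
rewrite H; last lra. rewrite (IH (p + lam i)) // => j q hq. apply H. have := lam_ge0 i; lra.
Qed.

Lemma psum_RInt (G : R -> R) p s :
  (forall x y, p <= x -> x <= y -> ex_RInt G x y) ->
  psum (fun i p => RInt G p (p + lam i)) p s = RInt G p (p + lsum lam s).
Proof.
elim: s p => [|i s IH] p H /=.
- by rewrite !lsum_nil Rplus_0_r RInt_point.
- have hl := lam_ge0 i.
  have hs : 0 <= lsum lam s by apply: lsum_ge0.
  rewrite IH; last by move=> x y hx hy; apply H; lra.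
  rewrite !lsum_cons -Rplus_assoc.
  have := RInt_Chasles G p (p + lam i) (p + lam i + lsum lam s).
  rewrite /plus /= => ->; first done.
  + apply H; lra.
  + apply H; lra.
Qed.

Fixpoint ins (key : I -> R) (i : I) (s : seq I) : seq I :=
  match s with
  | [::] => [:: i]
  | j :: s' => if Rle_dec (key i) (key j) then i :: j :: s' else j :: ins key i s'
  end.

Definition isort key (s : seq I) : seq I := foldr (ins key) [::] s.

Lemma perm_ins key i s : perm_eq (ins key i s) (i :: s).
Proof.
elim: s => [|j s IH] //=.
case: Rle_dec => _ //=.
apply: (@perm_trans _ (j :: i :: s)); first by rewrite perm_cons.
apply/permP => a /=; by rewrite addnCA.
Qed.

Lemma perm_isort key s : perm_eq (isort key s) s.
Proof.
elim: s => [|i s IH] //=.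
apply: perm_trans (perm_ins key i _) _. by rewrite perm_cons.
Qed.

Fixpoint ksorted (key : I -> R) (s : seq I) : Prop :=
  match s with
  | [::] => True
  | i :: s' => (forall j, j \in s' -> key i <= key j) /\ ksorted key s'
  end.

Lemma ksorted_ins key i s : ksorted key s -> ksorted key (ins key i s).
Proof.
elim: s => [|j s IH] /=.
- by split.
- move=> [Hj Hs]. case: Rle_dec => h /=.
  + split; last by split.
    move=> k; rewrite inE => /orP [/eqP ->|hk]; first lra.
    have := Hj k hk; lra.
  + split; last by apply IH.
    move=> k; rewrite (perm_mem (perm_ins key i s)) inE => /orP [/eqP ->|hk]; first lra.
    by apply Hj.
Qed.

Lemma ksorted_isort key s : ksorted key (isort key s).
Proof. elim: s => [|i s IH] //=. by apply ksorted_ins. Qed.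

Lemma abel (key : I -> R) (c : I -> R) (C : R -> R) (hf X : I -> R -> R) :
  (forall i j, key i <= key j -> forall t, 0 <= t -> hf i t <= hf j t) ->
  (forall i p acc, 0 <= p -> acc - C p <= 0 -> acc + c i - C (p + lam i) <= 0 ->
      X i p >= hf i (p + lam i) * (acc + c i - C (p + lam i)) - hf i p * (acc - C p)) ->
  forall s p acc H, 0 <= p -> ksorted key s -> (forall i, i \in s -> H <= hf i p) ->
   (forall k, acc + lsum c (take k s) <= C (p + lsum lam (take k s))) ->
   acc + lsum c s = C (p + lsum lam s) ->
   psum X p s >= - H * (acc - C p).
Proof.
move=> Hj HX; elim=> [|i s IH] p acc H hp Hs HH Hk Hf /=.
- rewrite !lsum_nil !Rplus_0_r in Hf. rewrite Hf. replace (C p - C p) with 0 by ring; lra.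
- have hl := lam_ge0 i.
  have h0 : acc - C p <= 0.
    have := Hk O; rewrite /= !lsum_nil !Rplus_0_r; lra.
  have h1 : acc + c i - C (p + lam i) <= 0.
    have := Hk (S O); rewrite /= take0 !lsum_cons !lsum_nil !Rplus_0_r; lra.
  case: Hs => Hs1 Hs2.
  have IH' := IH (p + lam i) (acc + c i) (hf i (p + lam i)) ltac:(lra) Hs2.
  have IH'' : psum X (p + lam i) s >= - hf i (p + lam i) * (acc + c i - C (p + lam i)).
    apply: IH'.
    + move=> j hj. apply: Hj; [exact: Hs1|lra].
    + move=> k. have := Hk k.+1. rewrite /= !lsum_cons. rewrite -!Rplus_assoc; lra.
    + move: Hf. rewrite !lsum_cons -!Rplus_assoc; lra.
  have := HX i p acc hp h0 h1.
  have := HH i (mem_head _ _).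
  nra.
Qed.

End Lists.

Lemma sorted_lb (I : finType) (key : I -> R) (hf : I -> R -> R) (s : seq I) p :
  (forall i j, key i <= key j -> forall t, 0 <= t -> hf i t <= hf j t) -> 0 <= p ->
  ksorted key s -> exists H, forall i, i \in s -> H <= hf i p.
Proof.
move=> Hj hp; case: s => [|i0 s] /=.
- by exists 0.
- move=> [H1 _]. exists (hf i0 p) => i; rewrite inE => /orP [/eqP ->|hi]; first lra.
  apply: Hj => //. exact: H1.
Qed.

Lemma psum_le_from (I : finType) (lam : I -> R) g h p s :
  (forall i, 0 <= lam i) ->
  (forall i q, p <= q -> g i q <= h i q) -> psum lam g p s <= psum lam h p s.
Proof.
move=> hl; elim: s p => [|i s IH] p H /=; first lra.
have := H i p (Rle_refl _). have := IH (p + lam i).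
have hi := hl i.
move=> H2 H1. have := H2 (fun j q hq => H j q ltac:(lra)). lra.
Qed.

Unset Implicit Arguments. Set Strict Implicit.

Lemma RInt_chasles3 (g : R -> R) a b c : ex_RInt g a b -> ex_RInt g b c ->
  RInt g a c = RInt g a b + RInt g b c.
Proof. move=> h1 h2. by rewrite -(RInt_Chasles g a b c h1 h2). Qed.

Lemma RInt_split_lin (h D : R -> R) x y :
  ex_RInt D x y -> ex_RInt (fun t => h t * D t) x y ->
  ex_RInt (fun t => (h t - h x) * D t) x y /\
  RInt (fun t => h t * D t) x y = h x * RInt D x y + RInt (fun t => (h t - h x) * D t) x y.
Proof.
move=> hD hhD.
have E : forall t, (h t - h x) * D t = minus (h t * D t) (scal (h x) (D t)).
  move=> t; rewrite /minus /plus /opp /scal /= /mult /=; ring.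
have ex1 : ex_RInt (fun t => minus (h t * D t) (scal (h x) (D t))) x y.
  apply: ex_RInt_minus => //; exact: ex_RInt_scal.
split.
- apply: (ex_RInt_ext (fun t => minus (h t * D t) (scal (h x) (D t)))) => // t _; by rewrite E.
- rewrite (RInt_ext (fun t => (h t - h x) * D t) (fun t => minus (h t * D t) (scal (h x) (D t)))).
  + rewrite RInt_minus //; last exact: ex_RInt_scal.
    rewrite RInt_scal //. rewrite /minus /plus /opp /scal /= /mult /=; lra.
  + move=> t _; by rewrite E.
Qed.

Lemma piece (h D : R -> R) p q Phip M :
  p <= q ->
  (forall x y, p <= x -> x <= y -> y <= q -> h x <= h y) ->
  (forall t, p <= t <= q -> Rabs (D t) <= M) ->
  (forall x y, p <= x -> x <= y -> y <= q -> ex_RInt D x y) ->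
  (forall x y, p <= x -> x <= y -> y <= q -> ex_RInt (fun t => h t * D t) x y) ->
  (forall t, p <= t <= q -> Phip + RInt D p t <= 0) ->
  RInt (fun t => h t * D t) p q >= h q * (Phip + RInt D p q) - h p * Phip.
Proof.
move=> hpq Hm HM HD HhD HPhi.
have M0 : 0 <= M by have := HM p ltac:(lra); have := Rabs_pos (D p); lra.
set S := fun t => RInt (fun t => h t * D t) p t.
set Phi := fun t => Phip + RInt D p t.
have key : forall n : nat, S q - h q * Phi q >= - h p * Phip - (h q - h p) * M * ((q - p) / INR n.+1).
  move=> n.
  set N := INR n.+1.
  have N0 : 0 < N by apply: lt_0_INR; apply/ltP.
  set dl := (q - p) / N.
  have dl0 : 0 <= dl by apply: Rmult_le_pos; [lra|left; apply: Rinv_0_lt_compat].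
  have sk : forall k : nat, (k <= n.+1)%nat -> p <= p + INR k * dl <= q.
    move=> k hk. have hk' : INR k <= N by apply: le_INR; apply/leP.
    split; first by have := pos_INR k; nra.
    have : INR k * dl <= N * dl by nra.
    have : N * dl = q - p by rewrite /dl; field; lra.
    lra.
  have claim : forall k : nat, (k <= n.+1)%nat ->
     S (p + INR k * dl) - h (p + INR k * dl) * Phi (p + INR k * dl) >=
     - h p * Phip - (h (p + INR k * dl) - h p) * M * dl.
    elim=> [|k IH] hk.
    - rewrite /S /Phi /= Rmult_0_l Rplus_0_r !RInt_point /zero /=. lra.
    - have hk1 : (k <= n.+1)%nat by apply: leq_trans hk.
      have [hx1 hx2] := sk k hk1.
      have [hy1 hy2] := sk k.+1 hk.
      set x := p + INR k * dl in IH hx1 hx2 *.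
      have ey : p + INR k.+1 * dl = x + dl by rewrite S_INR /x; ring.
      rewrite ey in hy1 hy2 *.
      have IH' := IH hk1.
      have hxy := Hm x (x + dl) hx1 ltac:(lra) hy2.
      have hpx := Hm p x ltac:(lra) hx1 hx2.
      have [exr eqr] := RInt_split_lin h D x (x + dl) (HD x (x + dl) hx1 ltac:(lra) hy2) (HhD x (x + dl) hx1 ltac:(lra) hy2).
      have Ebound : Rabs (RInt (fun t => (h t - h x) * D t) x (x + dl)) <= dl * ((h (x + dl) - h x) * M).
        have := norm_RInt_le_const (fun t => (h t - h x) * D t) x (x + dl) _ ((h (x + dl) - h x) * M) ltac:(lra).
        replace (x + dl - x) with dl by ring. apply.
        + move=> t ht. rewrite /norm /= /abs /= Rabs_mult.
          have := Hm x t hx1 ltac:(lra) ltac:(lra). have := Hm t (x + dl) ltac:(lra) ltac:(lra) hy2.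
          have := HM t ltac:(lra). have := Rabs_pos (D t).
          move=> a1 a2 a3 a4. rewrite Rabs_pos_eq; last lra. apply: Rmult_le_compat; lra.
        + exact: (RInt_correct _ _ _ exr).
      have ESy : S (x + dl) = S x + RInt (fun t => h t * D t) x (x + dl).
        rewrite /S. apply: RInt_chasles3; [apply: HhD|apply: HhD]; lra.
      have EPy : Phi (x + dl) = Phi x + RInt D x (x + dl).
        rewrite /Phi (RInt_chasles3 D p x (x + dl)); [ring|apply: HD|apply: HD]; lra.
      have Pneg : Phi (x + dl) <= 0 by apply: HPhi; lra.
      rewrite ESy eqr. rewrite EPy in Pneg *.
      have [Eb1 _] := proj1 (Rabs_le_between _ _) Ebound.
      nra.
  have := claim n.+1 (leqnn _).
  have -> : p + INR n.+1 * dl = q by rewrite /dl -/N; field; lra.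
  move=> h'. rewrite /dl in h' *. lra.
have K0 : 0 <= (h q - h p) * M * (q - p).
  have := Hm p q ltac:(lra) hpq ltac:(lra). move=> a. apply: Rmult_le_pos; [nra|lra].
have Hfin : S q - h q * Phi q + h p * Phip >= 0.
  apply: Rnot_lt_ge => hlt.
  set X := S q - h q * Phi q + h p * Phip in hlt.
  have [n hn] := INR_archimed (- X) ((h q - h p) * M * (q - p)) ltac:(lra).
  have := key n. rewrite S_INR.
  have hn0 := pos_INR n.
  have e : (h q - h p) * M * ((q - p) / (INR n + 1)) = (h q - h p) * M * (q - p) / (INR n + 1) by field; lra.
  rewrite e. move=> hk.
  have : (h q - h p) * M * (q - p) / (INR n + 1) < - X.
    apply: (Rmult_lt_reg_r (INR n + 1)); first lra.
    have -> : (h q - h p) * M * (q - p) / (INR n + 1) * (INR n + 1) = (h q - h p) * M * (q - p) by field; lra.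
    nra.
  rewrite /X in hlt *. lra.
rewrite /S /Phi in Hfin. lra.
Qed.

Lemma shift_mono (psi : R -> R) p al be :
  0 <= al -> 0 <= be ->
  (forall x y, p <= x -> x <= y -> psi x <= psi y) ->
  (forall x y, p <= x -> x <= y -> ex_RInt psi x y) ->
  RInt psi p (p + al) <= RInt psi (p + be) (p + be + al).
Proof.
move=> hal hbe Hm Hi.
have E := RInt_comp_lin psi 1 be p (p + al).
have ex : ex_RInt psi (1 * p + be) (1 * (p + al) + be).
  apply: Hi; lra.
rewrite (_ : p + be = 1 * p + be); last ring.
rewrite (_ : 1 * p + be + al = 1 * (p + al) + be); last ring.
rewrite -(E ex).
apply: RInt_le; first lra.
- apply: Hi; lra.
- apply: (ex_RInt_comp_lin psi 1 be p (p + al) ex).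
- move=> t ht. rewrite /scal /= /mult /= Rmult_1_l. apply: Hm; lra.
Qed.

Section Swap.
Variable I : finType.
Variable lam : I -> R.
Hypothesis lam_ge0 : forall i, 0 <= lam i.
Variable key : I -> R.
Variable phi : I -> R -> R.
Hypothesis phi_int : forall i x y, 0 <= x -> x <= y -> ex_RInt (phi i) x y.
Hypothesis phi_mono : forall i j, key j <= key i ->
   forall x y, 0 <= x -> x <= y -> phi j x - phi i x <= phi j y - phi i y.

Definition Mint p s := psum lam (fun i p => RInt (phi i) p (p + lam i)) p s.

Lemma swap2 i j p : key j <= key i -> 0 <= p ->
  RInt (phi j) p (p + lam j) + RInt (phi i) (p + lam j) (p + lam j + lam i) <=
  RInt (phi i) p (p + lam i) + RInt (phi j) (p + lam i) (p + lam i + lam j).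
Proof.
move=> hk hp.
have hi := lam_ge0 i; have hj := lam_ge0 j.
set e := p + lam i + lam j.
have ee : p + lam j + lam i = e by rewrite /e; ring.
rewrite ee.
have psi_int : forall x y, p <= x -> x <= y -> ex_RInt (fun t => phi j t - phi i t) x y.
  move=> x y hx hy. apply: (ex_RInt_ext (fun t => minus (phi j t) (phi i t))).
  - move=> t _; by rewrite /minus /plus /opp.
  - apply: ex_RInt_minus; apply: phi_int; lra.
have Hs := shift_mono (fun t => phi j t - phi i t) p (lam i) (lam j) hi hj
   (fun x y hx hy => phi_mono i j hk x y ltac:(lra) hy) psi_int.
rewrite -/e in Hs. rewrite (_ : p + lam j + lam i = e) in Hs; last by rewrite /e; ring.
have RI : forall x y, p <= x -> x <= y ->
   RInt (fun t => phi j t - phi i t) x y = RInt (phi j) x y - RInt (phi i) x y.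
  move=> x y hx hy.
  rewrite (RInt_ext (fun t => phi j t - phi i t) (fun t => minus (phi j t) (phi i t))).
  - rewrite RInt_minus; try (apply: phi_int; lra). by rewrite /minus /plus /opp.
  - move=> t _; by rewrite /minus /plus /opp.
rewrite !RI in Hs; try lra.
have C1 := RInt_chasles3 (phi i) p (p + lam j) e.
have C2 := RInt_chasles3 (phi j) p (p + lam i) e.
have C3 := RInt_chasles3 (phi i) p (p + lam i) e.
have C4 := RInt_chasles3 (phi j) p (p + lam j) e.
rewrite C1 in C3; try (apply: phi_int; lra).
rewrite C4 in C2; try (apply: phi_int; lra).
have := C3 ltac:(apply: phi_int; lra) ltac:(apply: phi_int; rewrite /e; lra).
have := C2 ltac:(apply: phi_int; lra) ltac:(apply: phi_int; rewrite /e; lra).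
lra.
Qed.

Lemma Mint_swap i j r p : key j <= key i -> 0 <= p ->
  Mint p (j :: i :: r) <= Mint p (i :: j :: r).
Proof.
move=> hk hp. rewrite /Mint /=.
have := swap2 i j p hk hp.
rewrite (_ : p + lam j + lam i = p + lam i + lam j); last ring.
lra.
Qed.

Lemma Mint_ins i s p : 0 <= p -> Mint p (ins key i s) <= Mint p (i :: s).
Proof.
elim: s p => [|j s IH] p hp /=; first lra.
case: Rle_dec => h /=; first lra.
have hj := lam_ge0 j.
have := IH (p + lam j) ltac:(lra). rewrite /Mint /= => H1.
have := Mint_swap i j s p ltac:(lra) hp. rewrite /Mint /=. lra.
Qed.

Lemma Mint_isort s p : 0 <= p -> Mint p (isort key s) <= Mint p s.
Proof.
elim: s p => [|i s IH] p hp /=; first lra.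
have hi := lam_ge0 i.
have := Mint_ins i (isort key s) p hp. rewrite /Mint /=.
have := IH (p + lam i) ltac:(lra). rewrite /Mint /=. lra.
Qed.

End Swap.
Arguments Mint {I} lam phi p s.

Lemma rsum_ge0 (T : finType) (A : pred T) (F : T -> R) :
  (forall i, 0 <= F i) -> 0 <= rsum A F.
Proof. move=> H; rewrite /rsum; apply: (big_ind (fun x => 0 <= x)) => //; [lra|move=> *; lra]. Qed.

Lemma rsum_sub (T : finType) (S : {set T}) (F : T -> R) :
  (forall i, 0 <= F i) -> rsum (mem S) F <= rsum predT F.
Proof.
move=> H. rewrite /rsum (bigID (fun i => i \in S) predT) /=.
have : 0 <= \big[Rplus/0]_(i | i \notin S) F i.
  apply: (big_ind (fun x => 0 <= x)) => //; [lra|move=> *; lra].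
have -> : \big[Rplus/0]_(i | true && (i \in S)) F i = \big[Rplus/0]_(i in S) F i.
  by apply: eq_bigl.
lra.
Qed.

Lemma rsum_split (T : finType) (A : pred T) (F G : T -> R) :
  rsum A (fun i => F i + G i) = rsum A F + rsum A G.
Proof. by rewrite /rsum big_split. Qed.

Lemma lsum_uniq (T : finType) (F : T -> R) (r : seq T) :
  uniq r -> lsum F r = rsum (mem [set i | i \in r]) F.
Proof.
move=> ur. rewrite /lsum /rsum big_uniq //. apply: eq_bigl => i. by rewrite !inE.
Qed.

Lemma lsum_full (T : finType) (F : T -> R) (r : seq T) :
  perm_eq r (enum T) -> lsum F r = rsum predT F.
Proof.
move=> pr. rewrite /lsum /rsum (perm_big _ pr) /=. by rewrite big_enum.
Qed.

Lemma lamS_full (T : finType) (lam : T -> R) : lamS lam setT = rsum predT lam.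
Proof. rewrite /lamS /rsum. apply: eq_bigl => i. by rewrite !inE. Qed.

Lemma rsum_setT (T : finType) (F : T -> R) : rsum (mem setT) F = rsum predT F.
Proof. rewrite /rsum. apply: eq_bigl => i. by rewrite !inE. Qed.

Lemma Pk0_inj_le s t : Pk 0 t <= Pk 0 s -> s <= t.
Proof.
rewrite !Pk0E => h. apply: Rnot_lt_le => hlt.
have := exp_increasing (- s) (- t) ltac:(lra). lra.
Qed.

Lemma Gf_strict s t : 0 <= s -> s < t -> Gf s < Gf t.
Proof.
move=> hs hst. rewrite /Gf !Pk0E !Pk1E.
have E : exp (-s) = exp (-t) * exp (t - s) by rewrite -exp_plus; f_equal; ring.
rewrite E.
have h1 := exp_ineq1 (t - s) ltac:(lra).
have h2 := exp_pos (-t).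
have : 2 + t < exp (t - s) * (2 + s) by nra.
nra.
Qed.

Lemma Gf_inj_le s t : 0 <= t -> Gf s <= Gf t -> s <= t.
Proof.
move=> ht h. apply: Rnot_lt_le => hlt. have := Gf_strict t s ht hlt. lra.
Qed.


Lemma cont01_add F G : cont01 F -> cont01 G -> cont01 (fun u v => F u v + G u v).
Proof. move=> CF CG u v hu hv. exact: (continuous_plus (fun z : R * R => F z.1 z.2) (fun z => G z.1 z.2) _ (CF u v hu hv) (CG u v hu hv)). Qed.
Lemma cont01_sub F G : cont01 F -> cont01 G -> cont01 (fun u v => F u v - G u v).
Proof. move=> CF CG u v hu hv. exact: (continuous_minus (fun z : R * R => F z.1 z.2) (fun z => G z.1 z.2) _ (CF u v hu hv) (CG u v hu hv)). Qed.
Lemma cont01_mul F G : cont01 F -> cont01 G -> cont01 (fun u v => F u v * G u v).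
Proof. move=> CF CG u v hu hv. exact: (continuous_mult (fun z : R * R => F z.1 z.2) (fun z => G z.1 z.2) _ (CF u v hu hv) (CG u v hu hv)). Qed.
Lemma cont01_c (c : R) : cont01 (fun _ _ => c).
Proof. move=> u v _ _. exact: continuous_const. Qed.
Lemma cont01_cv (F : R -> R -> R) c : 0 <= c <= 1 -> cont01 F -> cont01 (fun u v => F c v).
Proof.
move=> hc CF u v hu hv.
apply: (continuous_comp_2 (fun _ : R * R => c) (fun z : R * R => z.2) F).
- exact: continuous_const.
- exact: continuous_snd.
- exact: CF.
Qed.

Lemma RInt_aff (g : R -> R) al be ga x y : ex_RInt g x y ->
  RInt (fun t => al + be * (g t - ga)) x y = (y - x) * al + be * (RInt g x y - (y - x) * ga).
Proof.
move=> hg.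
have E : forall t, al + be * (g t - ga) = plus al (scal be (minus (g t) ga)).
  move=> t; rewrite /plus /scal /minus /plus /opp /= /mult /=; ring.
rewrite (RInt_ext _ (fun t => plus al (scal be (minus (g t) ga)))); last by move=> t _; rewrite E.
rewrite RInt_plus; first last.
- apply: ex_RInt_scal. apply: ex_RInt_minus => //. exact: ex_RInt_const.
- exact: ex_RInt_const.
rewrite RInt_const RInt_scal; last by apply: ex_RInt_minus => //; exact: ex_RInt_const.
rewrite RInt_minus //; last exact: ex_RInt_const.
rewrite RInt_const /plus /scal /minus /plus /opp /= /mult /=. lra.
Qed.

Section Main.
Variables (I J : finType) (lam : I -> R) (E : I -> J -> bool)
    (x : I -> J -> R) (f : R -> R -> R) (j1 j2 : J) (l1 l2 : R).
Hypothesis Hlam : forall i, 0 < lam i.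
Hypothesis HPM : in_PM2 lam E x.
Hypothesis Hnorm : normalized f.
Hypothesis HDR : DR_submodular f.
Hypothesis Hj : j1 <> j2.
Hypothesis Hl1 : 0 <= l1.
Hypothesis Hl2 : 0 <= l2.
Hypothesis Hx1 : rsum predT (fun i => x i j1) = 1 - Pk 0 l1.
Hypothesis Hx2 : rsum predT (fun i => x i j2) =
    (2 - Pk 0 l2 - Pk 1 l2) - (1 - Pk 0 (Rmin l1 l2)).

Lemma lam_ge0 i : 0 <= lam i.
Proof. by left. Qed.

Lemma xnn i j : 0 <= x i j.
Proof. by case: HPM. Qed.

Lemma x12_le i : x i j1 + x i j2 <= lam i.
Proof.
case: HPM => _ [_ [H _]].
apply: Rle_trans (H i).
rewrite /rsum (bigD1 j1) // (bigD1 j2) /=; last by apply/eqP => e; apply: Hj.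
have : 0 <= \big[Rplus/0]_(i0 | (i0 != j1) && (i0 != j2)) x i i0.
  apply: (big_ind (fun x => 0 <= x)) => //; [lra|move=> *; lra|move=> *; apply: xnn].
lra.
Qed.

Definition a i := x i j1 / lam i.
Definition b i := x i j1 / lam i + x i j2 / lam i.

Lemma a01 i : 0 <= a i <= 1.
Proof.
have h := Hlam i; have := xnn i j1; have := xnn i j2; have := x12_le i.
rewrite /a; split.
- apply: Rmult_le_pos; first lra. left; exact: Rinv_0_lt_compat.
- apply: (Rmult_le_reg_r (lam i)) => //. rewrite /Rdiv Rmult_assoc Rinv_l; lra.
Qed.

Lemma b01 i : 0 <= b i <= 1.
Proof.
have h := Hlam i; have := xnn i j1; have := xnn i j2; have := x12_le i.
have e : b i = (x i j1 + x i j2) / lam i by rewrite /b; field; lra.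
rewrite e; split.
- apply: Rmult_le_pos; first lra. left; exact: Rinv_0_lt_compat.
- apply: (Rmult_le_reg_r (lam i)) => //. rewrite /Rdiv Rmult_assoc Rinv_l; lra.
Qed.

Lemma c1E i : x i j1 = lam i * a i.
Proof. rewrite /a; field; have := Hlam i; lra. Qed.
Lemma c2E i : x i j1 + x i j2 = lam i * b i.
Proof. rewrite /b; field; have := Hlam i; lra. Qed.

Definition Lam := rsum predT lam.
Definition Fa t : R := RInt (astar l1) 0 t.
Definition Gb t : R := RInt (bstar l1 l2) 0 t.

Lemma lamS_ge0 S : 0 <= lamS lam S.
Proof. apply: rsum_ge0 => i; exact: lam_ge0. Qed.

Lemma l1_le : l1 <= Lam.
Proof.
case: HPM => _ [_ [_ [H _]]].
have := H setT j1. rewrite rsum_setT Hx1 lamS_full -/Lam => h.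
apply: Pk0_inj_le. lra.
Qed.

Lemma setA (S : {set I}) : rsum (mem S) (fun i => x i j1) <= Fa (lamS lam S).
Proof.
case: HPM => _ [_ [_ [H _]]].
have h0 := lamS_ge0 S.
case: (Rle_dec (lamS lam S) l1) => h.
- rewrite /Fa (Fa_le l1 (lamS lam S) h0 h). exact: H.
- rewrite /Fa (Fa_ge l1 l2 Hl1 Hl2 (lamS lam S)); last lra. rewrite -Hx1. apply: rsum_sub => i; exact: xnn.
Qed.

Lemma totA : Fa Lam = rsum predT (fun i => x i j1).
Proof. rewrite /Fa (Fa_ge l1 l2 Hl1 Hl2 Lam l1_le) Hx1 //. Qed.

Lemma tot12 : rsum predT (fun i => x i j1 + x i j2) =
   (1 - Pk 0 l1) + ((2 - Pk 0 l2 - Pk 1 l2) - (1 - Pk 0 (Rmin l1 l2))).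
Proof. by rewrite rsum_split Hx1 Hx2. Qed.

Lemma l2_le : l2 <= Lam.
Proof.
case: (Rle_dec l1 l2) => h.
- case: HPM => _ [_ [_ [_ H]]].
  have := H setT j1 j2 Hj. rewrite rsum_setT tot12 lamS_full -/Lam Rmin_left //.
  move=> hh. apply: Gf_inj_le; first by have := lamS_ge0 setT; rewrite lamS_full.
  rewrite /Gf; lra.
- have := l1_le; lra.
Qed.

Lemma setB (S : {set I}) : rsum (mem S) (fun i => x i j1 + x i j2) <= Gb (lamS lam S).
Proof.
case: HPM => _ [_ [_ [H1 H3]]].
have h0 := lamS_ge0 S.
have Hsub : rsum (mem S) (fun i => x i j1 + x i j2) <= rsum predT (fun i => x i j1 + x i j2).
  apply: rsum_sub => i; have := xnn i j1; have := xnn i j2; lra.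
have C3 := H3 S j1 j2 Hj.
rewrite /Gb.
case: (Rle_dec (lamS lam S) l2) => h.
- rewrite (Gb_le2 l1 l2 (lamS lam S) h0 h) /Gf. lra.
case: (Rle_dec l1 l2) => hl.
- rewrite (Gb_case1 l1 l2 Hl1 Hl2 (lamS lam S) hl); last lra. rewrite tot12 Rmin_left // in Hsub. rewrite /Gf; lra.
case: (Rle_dec (lamS lam S) l1) => h'.
- rewrite (Gb_case2a l1 l2 Hl1 Hl2 (lamS lam S)); try lra.
  rewrite rsum_split. have := H1 S j1.
  have : rsum (mem S) (fun i => x i j2) <= rsum predT (fun i => x i j2).
    apply: rsum_sub => i; exact: xnn.
  rewrite Hx2 Rmin_right; last lra. rewrite /Gf; lra.
- rewrite (Gb_case2b l1 l2 Hl1 Hl2 (lamS lam S)); try lra. rewrite tot12 Rmin_right in Hsub; last lra. rewrite /Gf; lra.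
Qed.

Lemma totB : Gb Lam = rsum predT (fun i => x i j1 + x i j2).
Proof.
have hA := l1_le; have hB := l2_le.
rewrite tot12 /Gb.
case: (Rle_dec l1 l2) => hl.
- rewrite (Gb_case1 l1 l2 Hl1 Hl2 Lam hl hB) Rmin_left // /Gf; lra.
- rewrite (Gb_case2b l1 l2 Hl1 Hl2 Lam); try lra. rewrite Rmin_right; last lra. rewrite /Gf; lra.
Qed.


Lemma listA r : uniq r -> lsum (fun i => x i j1) r <= Fa (lsum lam r).
Proof. move=> ur. rewrite !lsum_uniq //. exact: setA. Qed.
Lemma listB r : uniq r -> lsum (fun i => x i j1 + x i j2) r <= Gb (lsum lam r).
Proof. move=> ur. rewrite !lsum_uniq //. exact: setB. Qed.

Lemma jc_f u v : 0 <= u <= 1 -> 0 <= v <= 1 -> jcont f u v.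
Proof. move=> hu hv. have := smooth01 f HDR u v hu hv. intuition. Qed.
Lemma jc_d1f u v : 0 <= u <= 1 -> 0 <= v <= 1 -> jcont (d1 f) u v.
Proof. move=> hu hv. have := smooth01 f HDR u v hu hv. intuition. Qed.
Lemma cont_f : cont01 f.
Proof. move=> u v hu hv; exact: jc_f. Qed.
Lemma cont_d1f : cont01 (d1 f).
Proof. move=> u v hu hv; exact: jc_d1f. Qed.

Definition phi i t := f (a i) (bstar l1 l2 t).
Definition psi t := f (astar l1 t) (bstar l1 l2 t).
Definition hA i := d2 f (a i) (b i).
Definition hC i t := d1 f (a i) (bstar l1 l2 t).

Lemma phi_int i p q : 0 <= p -> p <= q -> ex_RInt (phi i) p q.
Proof.
move=> hp hq. exact: (ex_RInt_prof (fun u v => f (a i) v) l1 l2 p q Hl1 Hl2 hp hq (cont01_cv f (a i) (a01 i) cont_f)).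
Qed.
Lemma psi_int p q : 0 <= p -> p <= q -> ex_RInt psi p q.
Proof. move=> hp hq. exact: (ex_RInt_prof f l1 l2 p q Hl1 Hl2 hp hq cont_f). Qed.

Lemma Gb_diff p q : 0 <= p -> p <= q -> RInt (bstar l1 l2) p q = Gb q - Gb p.
Proof.
move=> hp hq. rewrite /Gb (RInt_chasles3 _ 0 p q); try (apply: ex_bstar; lra). lra.
Qed.
Lemma Fa_diff p q : 0 <= p -> p <= q -> RInt (astar l1) p q = Fa q - Fa p.
Proof.
move=> hp hq. rewrite /Fa (RInt_chasles3 _ 0 p q); try (apply: (ex_astar l1 l2); lra). lra.
Qed.

Lemma stepA_type i q : 0 <= q ->
  hA i * ((x i j1 + x i j2) - (Gb (q + lam i) - Gb q)) <= lam i * f (a i) (b i) - RInt (phi i) q (q + lam i).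
Proof.
move=> hq. have hl := lam_ge0 i.
have exb : ex_RInt (bstar l1 l2) q (q + lam i) by apply: (ex_bstar l1 l2); lra.
have H : RInt (phi i) q (q + lam i) <= RInt (fun t => f (a i) (b i) + hA i * (bstar l1 l2 t - b i)) q (q + lam i).
  apply: RInt_le; first lra.
  - apply: phi_int; lra.
  - exact: (ex_RInt_prof (fun u v => f (a i) (b i) + hA i * (v - b i)) l1 l2 q (q + lam i) Hl1 Hl2 hq ltac:(lra)
      (cont01_add _ _ (cont01_c _) (cont01_mul _ _ (cont01_c _) (cont01_sub _ _ cont01_snd (cont01_c _))))).
  - move=> t ht. rewrite /phi /hA /=. apply: (tan2 f HDR); [exact: a01|exact: b01|apply: bstar_01; lra].
rewrite RInt_aff // Gb_diff in H; try lra.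
rewrite c2E. rewrite (_ : q + lam i - q = lam i) in H; last ring.
lra.
Qed.

Definition sig := isort hA (enum I).

Lemma stepA : Mint lam phi 0 sig <= rsum predT (fun i => lam i * f (a i) (b i)).
Proof.
have psig : perm_eq sig (enum I) by apply: perm_isort.
rewrite -(lsum_full _ _ _ psig) -(psum_const lam _ 0).
set XA := fun i p => hA i * ((x i j1 + x i j2) - (Gb (p + lam i) - Gb p)).
have H1 : psum lam XA 0 sig <= psum lam (fun i p => lam i * f (a i) (b i) - RInt (phi i) p (p + lam i)) 0 sig.
  apply: psum_le_from; first exact: lam_ge0.
  move=> i q hq. exact: stepA_type.
have H2 : 0 <= psum lam XA 0 sig.
  have [H HH] := sorted_lb (hf := fun i _ => hA i) (p := 0) (fun i j h t _ => h) (Rle_refl 0) (ksorted_isort hA (enum I)).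
  have := @abel _ lam lam_ge0 hA (fun i => x i j1 + x i j2) Gb (fun i _ => hA i) XA
     (fun i j h t _ => h) _ sig 0 0 H (Rle_refl 0) (ksorted_isort hA (enum I)) HH.
  have G0 : Gb 0 = 0 by rewrite /Gb RInt_point.
  rewrite G0. move=> HA.
  have : psum lam XA 0 sig >= - H * (0 - 0).
    apply: HA.
    - move=> i p acc hp h1 h2. rewrite /XA. right. ring.
    - move=> k. rewrite !Rplus_0_l. apply: listB. apply: take_uniq. rewrite (perm_uniq psig). exact: enum_uniq.
    - rewrite !Rplus_0_l (lsum_full _ _ _ psig) (lsum_full _ _ _ psig) -/Lam totB //.
  lra.
have Ed : psum lam (fun i p => lam i * f (a i) (b i) - RInt (phi i) p (p + lam i)) 0 sig =
  psum lam (fun i _ => lam i * f (a i) (b i)) 0 sig - Mint lam phi 0 sig.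
  rewrite /Mint /Rminus -psum_opp -psum_plus //.
lra.
Qed.


Definition tau := isort (fun i => - a i) sig.

Lemma stepB : Mint lam phi 0 tau <= Mint lam phi 0 sig.
Proof.
apply: (@Mint_isort I lam lam_ge0 (fun i => - a i) phi _ _ sig 0 (Rle_refl 0)).
- move=> i p q hp hq. exact: phi_int.
- move=> i j hk y z hy hyz. rewrite /phi.
  have := bstar_anti l1 l2 y z hy hyz. have := bstar_01 l1 l2 y hy. have := bstar_01 l1 l2 z ltac:(lra).
  move=> h1 h2 h3.
  have := diff_anti f HDR (a i) (a j) (bstar l1 l2 z) (bstar l1 l2 y) ltac:(have := a01 i; lra) ltac:(lra)
    ltac:(have := a01 j; lra) ltac:(lra) h3 ltac:(lra).
  lra.
Qed.

Lemma RInt_D i p t : 0 <= p -> p <= t ->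
  RInt (fun s => a i - astar l1 s) p t = (t - p) * a i - (Fa t - Fa p).
Proof.
move=> hp ht.
rewrite (RInt_ext _ (fun s => a i + (-1) * (astar l1 s - 0))); last by move=> s _; lra.
rewrite RInt_aff; last by apply: (ex_astar l1 l2); lra.
rewrite Fa_diff //. lra.
Qed.

Lemma astar_lb p t : 0 <= p -> p <= t -> (t - p) * astar l1 t <= RInt (astar l1) p t.
Proof.
move=> hp ht.
have := RInt_le (fun _ => astar l1 t) (astar l1) p t ht (ex_RInt_const _ _ _) ltac:(apply: (ex_astar l1 l2); lra).
rewrite RInt_const /scal /= /mult /=. apply. move=> s hs. apply: astar_anti; lra.
Qed.

Lemma astar_ub t q : 0 <= t -> t <= q -> RInt (astar l1) t q <= (q - t) * astar l1 t.
Proof.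
move=> hp ht.
have := RInt_le (astar l1) (fun _ => astar l1 t) t q ht ltac:(apply: (ex_astar l1 l2); lra) (ex_RInt_const _ _ _).
rewrite RInt_const /scal /= /mult /=. apply. move=> s hs. apply: astar_anti; lra.
Qed.

Definition XC i p := RInt (fun t => hC i t * (a i - astar l1 t)) p (p + lam i).

Lemma stepC_type i p acc : 0 <= p -> acc - Fa p <= 0 -> acc + x i j1 - Fa (p + lam i) <= 0 ->
  XC i p >= hC i (p + lam i) * (acc + x i j1 - Fa (p + lam i)) - hC i p * (acc - Fa p).
Proof.
move=> hp h0 h1. have hl := lam_ge0 i. have ha := a01 i.
set q := p + lam i.
have hpq : p <= q by rewrite /q; lra.
have Hp := piece (fun t => hC i t) (fun t => a i - astar l1 t) p q (acc - Fa p) 1 hpq.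
have E1 : acc - Fa p + RInt (fun t => a i - astar l1 t) p q = acc + x i j1 - Fa q.
  rewrite RInt_D // c1E /q. ring.
rewrite -E1. apply: Hp.
- move=> y z hy hyz hz. rewrite /hC.
  have := bstar_anti l1 l2 y z ltac:(lra) hyz. have := bstar_01 l1 l2 y ltac:(lra).
  have := bstar_01 l1 l2 z ltac:(lra). move=> b1 b2 b3.
  apply: (d1_anti_v f HDR); lra.
- move=> t ht. have := astar_01 l1 t ltac:(lra). move=> h. apply: Rabs_le; lra.
- move=> y z hy hyz hz.
  exact: (ex_RInt_prof (fun u v => a i - u) l1 l2 y z Hl1 Hl2 ltac:(lra) hyz
     (cont01_sub _ _ (cont01_c _) cont01_fst)).
- move=> y z hy hyz hz.
  exact: (ex_RInt_prof (fun u v => d1 f (a i) v * (a i - u)) l1 l2 y z Hl1 Hl2 ltac:(lra) hyz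
     (cont01_mul _ _ (cont01_cv _ _ ha cont_d1f) (cont01_sub _ _ (cont01_c _) cont01_fst))).
- move=> t ht. rewrite RInt_D; try lra.
  have L := astar_lb p t hp ltac:(lra). have U := astar_ub t q ltac:(lra) ltac:(lra).
  rewrite Fa_diff in L; try lra. rewrite Fa_diff in U; try lra.
  have := astar_01 l1 t ltac:(lra).
  have h1' : acc + lam i * a i - Fa q <= 0 by rewrite -c1E.
  rewrite /q in U h1' ht.
  case: (Rle_dec 0 (a i - astar l1 t)) => hd.
  + have : 0 <= (p + lam i - t) * (a i - astar l1 t) by apply: Rmult_le_pos; lra.
    have -> : acc - Fa p + ((t - p) * a i - (Fa t - Fa p)) =
      (acc + lam i * a i - Fa (p + lam i)) - (p + lam i - t) * (a i - astar l1 t)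
      + ((Fa (p + lam i) - Fa t) - (p + lam i - t) * astar l1 t) by ring.
    lra.
  + have : (t - p) * (a i - astar l1 t) <= 0.
      have hd' : a i - astar l1 t < 0 by lra. nra.
    have -> : acc - Fa p + ((t - p) * a i - (Fa t - Fa p)) =
      (acc - Fa p) + (t - p) * (a i - astar l1 t) - ((Fa t - Fa p) - (t - p) * astar l1 t) by ring.
    lra.
Qed.

Lemma stepC_type2 i p : 0 <= p ->
  XC i p <= RInt (phi i) p (p + lam i) - RInt psi p (p + lam i).
Proof.
move=> hp. have hl := lam_ge0 i.
have ex1 := phi_int i p (p + lam i) hp ltac:(lra).
have ex2 := psi_int p (p + lam i) hp ltac:(lra).
have -> : RInt (phi i) p (p + lam i) - RInt psi p (p + lam i) = RInt (fun t => phi i t - psi t) p (p + lam i).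
  rewrite (RInt_ext (fun t => phi i t - psi t) (fun t => minus (phi i t) (psi t))); last by move=> t _; rewrite /minus /plus /opp.
  rewrite RInt_minus //.
apply: RInt_le; first lra.
- exact: (ex_RInt_prof (fun u v => d1 f (a i) v * (a i - u)) l1 l2 p (p + lam i) Hl1 Hl2 hp ltac:(lra)
     (cont01_mul _ _ (cont01_cv _ _ (a01 i) cont_d1f) (cont01_sub _ _ (cont01_c _) cont01_fst))).
- apply: (ex_RInt_ext (fun t => minus (phi i t) (psi t))); first by move=> t _; rewrite /minus /plus /opp.
  exact: ex_RInt_minus.
- move=> t ht. rewrite /phi /psi /hC /=.
  have := tan1 f HDR (a i) (astar l1 t) (bstar l1 l2 t) (a01 i) (astar_01 l1 t ltac:(lra)) (bstar_01 l1 l2 t ltac:(lra)).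
  lra.
Qed.

Lemma stepC : RInt psi 0 Lam <= Mint lam phi 0 tau.
Proof.
have psig : perm_eq sig (enum I) by apply: perm_isort.
have ptau : perm_eq tau (enum I) by apply: perm_trans (perm_isort _ _) psig.
have Ltau : Lam = lsum lam tau by rewrite (lsum_full _ _ _ ptau).
have Ep : RInt psi 0 Lam = psum lam (fun i p => RInt psi p (p + lam i)) 0 tau.
  rewrite (psum_RInt lam_ge0); first by rewrite Rplus_0_l -Ltau.
  move=> y z hy hz. apply: psi_int; lra.
rewrite Ep.
have H1 : psum lam XC 0 tau <= psum lam (fun i p => RInt (phi i) p (p + lam i) - RInt psi p (p + lam i)) 0 tau.
  apply: psum_le_from; first exact: lam_ge0.
  move=> i q hq. exact: stepC_type2.
have junc : forall i j, - a i <= - a j -> forall t, 0 <= t -> hC i t <= hC j t.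
  move=> i j hij t ht. rewrite /hC.
  apply: (d1_anti_u f HDR); [have := a01 j; lra|lra|have := a01 i; lra|exact: bstar_01].
have Hs := ksorted_isort (fun i => - a i) sig.
have H2 : 0 <= psum lam XC 0 tau.
  have [H HH] := sorted_lb (hf := hC) (p := 0) junc (Rle_refl 0) Hs.
  have := @abel _ lam lam_ge0 (fun i => - a i) (fun i => x i j1) Fa hC XC
     junc _ tau 0 0 H (Rle_refl 0) Hs HH.
  have F0 : Fa 0 = 0 by rewrite /Fa RInt_point.
  rewrite F0. move=> HA.
  have : psum lam XC 0 tau >= - H * (0 - 0).
    apply: HA.
    - move=> i p acc hp h1 h2. exact: stepC_type.
    - move=> k. rewrite !Rplus_0_l. apply: listA. apply: take_uniq. rewrite (perm_uniq ptau). exact: enum_uniq.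
    - rewrite !Rplus_0_l (lsum_full _ _ _ ptau) (lsum_full _ _ _ ptau) -/Lam totA //.
  lra.
have Ed : psum lam (fun i p => RInt (phi i) p (p + lam i) - RInt psi p (p + lam i)) 0 tau =
  Mint lam phi 0 tau - psum lam (fun i p => RInt psi p (p + lam i)) 0 tau.
  rewrite /Mint /Rminus -psum_opp -psum_plus //.
lra.
Qed.

Lemma f00 : f 0 0 = 0.
Proof. exact: Hnorm. Qed.

Lemma rhs1 : l1 <= l2 ->
  RInt psi 0 Lam = RInt (fun l => f (Pk 0 l) (Pk 1 l)) 0 l1 + RInt (fun l => f 0 (Pk 1 l)) l1 l2.
Proof.
move=> hl. have hL := l2_le.
rewrite (RInt_chasles3 psi 0 l1 Lam); try (apply: psi_int; lra).
rewrite (RInt_chasles3 psi l1 l2 Lam); try (apply: psi_int; lra).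
rewrite (RInt_ext psi (fun l => f (Pk 0 l) (Pk 1 l)) 0 l1); last first.
  rewrite Rmin_left // Rmax_right // => s hs. rewrite /psi /astar /bstar.
  repeat (case: Rlt_dec => ? /=; try lra).
rewrite (RInt_ext psi (fun l => f 0 (Pk 1 l)) l1 l2); last first.
  rewrite Rmin_left // Rmax_right // => s hs. rewrite /psi /astar /bstar.
  repeat (case: Rlt_dec => ? /=; try lra).
rewrite (RInt_ext psi (fun _ => 0) l2 Lam); last first.
  rewrite Rmin_left // Rmax_right // => s hs. rewrite /psi /astar /bstar.
  repeat (case: Rlt_dec => ? /=; try lra). exact: f00.
rewrite RInt_zero. lra.
Qed.

Lemma rhs2 : l2 < l1 ->
  RInt psi 0 Lam = RInt (fun l => f (Pk 0 l) (Pk 1 l)) 0 l2 + RInt (fun l => f (Pk 0 l) (Pk 0 l)) l2 l1.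
Proof.
move=> hl. have hL := l1_le.
rewrite (RInt_chasles3 psi 0 l2 Lam); try (apply: psi_int; lra).
rewrite (RInt_chasles3 psi l2 l1 Lam); try (apply: psi_int; lra).
rewrite (RInt_ext psi (fun l => f (Pk 0 l) (Pk 1 l)) 0 l2); last first.
  rewrite Rmin_left // Rmax_right // => s hs. rewrite /psi /astar /bstar.
  repeat (case: Rlt_dec => ? /=; try lra).
rewrite (RInt_ext psi (fun l => f (Pk 0 l) (Pk 0 l)) l2 l1); last first.
  rewrite Rmin_left; last lra. rewrite Rmax_right; last lra. move=> s hs. rewrite /psi /astar /bstar.
  repeat (case: Rlt_dec => ? /=; try lra).
rewrite (RInt_ext psi (fun _ => 0) l1 Lam); last first.
  rewrite Rmin_left // Rmax_right // => s hs. rewrite /psi /astar /bstar.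
  repeat (case: Rlt_dec => ? /=; try lra). exact: f00.
rewrite RInt_zero. lra.
Qed.

Lemma main_chain : RInt psi 0 Lam <= rsum predT (fun i => lam i * f (a i) (b i)).
Proof. have := stepA; have := stepB; have := stepC; lra. Qed.

End Main.

Theorem mainTheorem10 (I J : finType) (lam : I -> R) (E : I -> J -> bool)
    (x : I -> J -> R) (f : R -> R -> R) (j1 j2 : J) (l1 l2 : R) :
  (forall i, 0 < lam i) ->
  in_PM2 lam E x ->
  normalized f -> DR_submodular f ->
  j1 <> j2 ->
  0 <= l1 -> 0 <= l2 ->
  rsum predT (fun i => x i j1) = 1 - Pk 0 l1 ->
  rsum predT (fun i => x i j2) =
    (2 - Pk 0 l2 - Pk 1 l2) - (1 - Pk 0 (Rmin l1 l2)) ->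
  (l1 <= l2 ->
    rsum predT (fun i => lam i * f (x i j1 / lam i) (x i j1 / lam i + x i j2 / lam i))
    >= RInt (fun l => f (Pk 0 l) (Pk 1 l)) 0 l1
       + RInt (fun l => f 0 (Pk 1 l)) l1 l2) /\
  (l1 > l2 ->
    rsum predT (fun i => lam i * f (x i j1 / lam i) (x i j1 / lam i + x i j2 / lam i))
    >= RInt (fun l => f (Pk 0 l) (Pk 1 l)) 0 l2
       + RInt (fun l => f (Pk 0 l) (Pk 0 l)) l2 l1).
Proof.
move=> Hlam HPM Hnorm HDR Hj Hl1 Hl2 Hx1 Hx2.
have Hc := main_chain I J lam E x f j1 j2 l1 l2 Hlam HPM HDR Hj Hl1 Hl2 Hx1 Hx2.
split => hl.
- rewrite -(rhs1 I J lam E x f j1 j2 l1 l2 Hlam HPM Hnorm HDR Hj Hl1 Hl2 Hx1 Hx2 hl).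
  apply: Rle_ge. exact: Hc.
- rewrite -(rhs2 I J lam E x f j1 l1 l2 HPM Hnorm HDR Hl1 Hl2 Hx1 hl).
  apply: Rle_ge. exact: Hc.
Qed.
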